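(* Let $\mathbb S$ be the free semigroup action on the compact metric space $X$ generated by continuous maps $g_1,\dots,g_p$, and let $K\subset X$ be closed. (i) If $h_{top}(K,\mathbb S)>0$, then $K\cap E_p(X,\mathbb S)\neq\emptyset$. (ii) If $h_{top}(K,\mathbb S)=h_{top}(X,\mathbb S)$, then $K\cap E^f_p(X,\mathbb S)\neq\emptyset$.
   Context: Setting: $(X,d)$ compact metric space, $g_1,\dots,g_p:X\to X$ continuous; $G_n^*$ the set of words $\underline g=g_{i_n}\cdots g_{i_1}$, $i_j\in\{1,\dots,p\}$; $d_{\underline g}(x,y)=\max_{0\le j\le n}d(g_{i_j}\cdots g_{i_1}x,g_{i_j}\cdots g_{i_1}y)$; $s(K,\underline g,\varepsilon)$ the maximal cardinality of a $(\underline g,\varepsilon)$-separated subset of $K$; $h_{top}(K,\mathbb S)=\lim_{\varepsilon\to0}\limsup_n\frac1n\log\big(p^{-n}\sum_{\underline g\in G_n^*}s(K,\underline g,\varepsilon)\big)$. $E_p(X,\mathbb S)$: points $x_0$ with $h_{top}(N,\mathbb S)>0$ for every closed neighbourhood $N$ of $x_0$. $E^f_p(X,\mathbb S)$: points $x_0$ with $h_{top}(N,\mathbb S)=h_{top}(X,\mathbb S)$ for every closed neighbourhood $N$ of $x_0$. *)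

(* Defs.v *)
From HB Require Import structures.
From mathcomp Require Import all_boot all_order all_algebra.
From mathcomp Require Import all_classical all_reals all_analysis.
Set Implicit Arguments. Unset Strict Implicit. Unset Printing Implicit Defensive.
Import Order.TTheory GRing.Theory Num.Theory.
Local Open Scope classical_set_scope.
Local Open Scope ring_scope.

Section FreeSemigroupEntropy.
Variables (R : realType) (X : Type) (d : X -> X -> R).

Definition is_metric : Prop :=
  [/\ forall x y, d x y = 0 <-> x = y,
      forall x y, d x y = d y x &
      forall x y z, d x z <= d x y + d y z].

Definition mopen (U : set X) : Prop :=
  forall x, U x -> exists2 e : R, 0 < e & forall y, d x y < e -> U y.

Definition mclosed (F : set X) : Prop := mopen (~` F).

Fixpoint has_elt (I : Type) (s : seq I) (i : I) : Prop :=
  if s is j :: s' then j = i \/ has_elt s' i else False.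

Definition mcompact_space : Prop :=
  forall (I : Type) (U : I -> set X),
    (forall i, mopen (U i)) -> [set: X] `<=` \bigcup_(i in [set: I]) U i ->
    exists s : seq I, forall x, exists2 i, has_elt s i & U i x.

Definition mcontinuous (f : X -> X) : Prop :=
  forall x (e : R), 0 < e -> exists2 del : R, 0 < del &
    forall y, d x y < del -> d (f x) (f y) < e.

Definition closed_nbhd (x0 : X) (N : set X) : Prop :=
  mclosed N /\ exists U, [/\ mopen U, U x0 & U `<=` N].

Variables (p : nat) (g : 'I_p -> X -> X).

(* the word w = [:: i_1; ...; i_n] acts as g_{i_n} o ... o g_{i_1} *)
Definition wapply (w : seq 'I_p) (x : X) : X := foldl (fun y i => g i y) x w.

Definition dword (w : seq 'I_p) (x y : X) : R :=
  \big[Num.max/0]_(j < (size w).+1) d (wapply (take j w) x) (wapply (take j w) y).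

Definition separated_enum (K : set X) (w : seq 'I_p) (eps : R) (k : nat)
    (f : 'I_k -> X) : Prop :=
  [/\ injective f, forall i, K (f i) &
      forall i j, i != j -> eps < dword w (f i) (f j)].

Definition sep_card (K : set X) (w : seq 'I_p) (eps : R) : \bar R :=
  ereal_sup [set k%:R%:E | k in [set k | exists f, separated_enum K w eps (k:=k) f]].

Local Open Scope ereal_scope.

Definition entropy_term (K : set X) (eps : R) (n : nat) : \bar R :=
  ((n%:R)^-1)%:E *
  lne ((((p%:R ^+ n)^-1)%R)%:E * \sum_(w : n.-tuple 'I_p) sep_card K w eps).

Definition htop (K : set X) : \bar R :=
  lim ((fun eps : R => limn_esup (entropy_term K eps)) @ 0%R^'+).

Definition Ep : set X :=
  [set x0 | forall N, closed_nbhd x0 N -> 0 < htop N].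

Definition Epf : set X :=
  [set x0 | forall N, closed_nbhd x0 N -> htop N = htop [set: X]].

End FreeSemigroupEntropy.

(* Main.v *)
Require Import Defs.
From HB Require Import structures.
From mathcomp Require Import all_boot all_order all_algebra.
From mathcomp Require Import all_classical all_reals all_analysis.
From mathcomp Require Import lra.
Import Order.TTheory GRing.Theory Num.Theory.
Set Implicit Arguments. Unset Strict Implicit. Unset Printing Implicit Defensive.
Local Open Scope classical_set_scope.
Local Open Scope ring_scope.
Local Open Scope ereal_scope.

Lemma esup_lt_near (R : realType) (u : (\bar R)^nat) (r : \bar R) :
  limn_esup u < r -> \forall n \near \oo, u n < r.
Proof.
rewrite /limn_esup /limf_esup => /ereal_inf_lt[_ [V V0 <-]] Vr.
apply: filterS V0 => n Vn; apply: le_lt_trans Vr.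
by apply: ereal_sup_ubound; exists n.
Qed.

Lemma near_le_esup (R : realType) (u : (\bar R)^nat) (r : \bar R) :
  (\forall n \near \oo, u n <= r) -> limn_esup u <= r.
Proof.
move=> H; rewrite /limn_esup /limf_esup.
apply: (@le_trans _ _ (ereal_sup (u @` [set n | u n <= r]))).
  by apply: ereal_inf_lbound; exists [set n | u n <= r].
by apply: ge_ereal_sup => _ [n /= ? <-].
Qed.

Lemma le_by_gt (R : realType) (x y : \bar R) :
  (forall r : R, y < r%:E -> x <= r%:E) -> x <= y.
Proof.
move=> H; case: y H => [s| |] H.
- apply/lee_addgt0Pr => e e0; apply: H; rewrite lte_fin ltrDl //.
- by rewrite leey.
- case: x H => [t| |] H //.
  + have := H (t - 1)%R (ltNyr _); rewrite lee_fin => h; exfalso; clear H; lra.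
  + by have := H 0%R (ltNyr _).
Qed.

Lemma le_limn_esup' (R : realType) (u v : (\bar R)^nat) :
  (forall n, u n <= v n) -> limn_esup u <= limn_esup v.
Proof.
move=> uv; apply: le_by_gt => r /esup_lt_near vr.
apply: near_le_esup; apply: filterS vr => n vn.
exact: le_trans (uv n) (ltW vn).
Qed.

Lemma lt_between (R : realType) (m : \bar R) (r : R) :
  m < r%:E -> exists r' : R, m < r'%:E /\ (r' < r)%R.
Proof.
case: m => [s| |] //.
- rewrite lte_fin => sr; exists ((s + r) / 2)%R; rewrite lte_fin; split; lra.
- move=> _; exists (r - 1)%R; split; [exact: ltNyr| lra].
Qed.

Lemma limn_esup_union (R : realType) (u a b : (\bar R)^nat) (c : R) :
  (forall n, (0 < n)%N -> u n <= maxe (a n) (b n) + (c / n%:R)%:E) ->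
  limn_esup u <= maxe (limn_esup a) (limn_esup b).
Proof.
move=> H; apply: le_by_gt => r /lt_between [r' [mr' r'r]].
have ha : limn_esup a < r'%:E by apply: le_lt_trans mr'; rewrite le_max lexx.
have hb : limn_esup b < r'%:E by apply: le_lt_trans mr'; rewrite le_max lexx orbT.
have [a' b'] := (esup_lt_near ha, esup_lt_near hb).
apply: near_le_esup.
near=> n.
have n0 : (0 < n)%N by near: n; exact: nbhs_infty_gt.
apply: (le_trans (H n n0)).
have -> : r = (r' + (r - r'))%R by lra.
rewrite EFinD; apply: leeD.
  by rewrite ge_max; apply/andP; split; apply: ltW; near: n.
rewrite lee_fin ler_pdivrMr ?ltr0n //.
near: n.
have := nbhs_infty_gtr (c / (r - r'))%R.
apply: filterS => n; rewrite ltr_pdivrMr ?subr_gt0 // => h.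
by rewrite mulrC; apply: ltW.
Unshelve. all: by end_near.
Qed.


Lemma sep_card_ge0 (R : realType) (X : Type) (d : X -> X -> R) (p : nat)
  (g : 'I_p -> X -> X) K w eps : 0 <= sep_card d g K w eps.
Proof.
apply: ereal_sup_ubound; exists 0%N => //=.
exists (fun i : 'I_0 => match i with @Ordinal _ m h => False_rect X (Bool.diff_false_true h) end).
by split; move=> [].
Qed.

Lemma sep_card_sub (R : realType) (X : Type) (d : X -> X -> R) (p : nat)
  (g : 'I_p -> X -> X) (A B : set X) w eps :
  A `<=` B -> sep_card d g A w eps <= sep_card d g B w eps.
Proof.
move=> AB; apply: ereal_sup_le => _ [k [f [fi fA fs]] <-].
by exists k => //; exists f; split => // i; apply: AB.
Qed.

Lemma sep_card_eps (R : realType) (X : Type) (d : X -> X -> R) (p : nat)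
  (g : 'I_p -> X -> X) (A : set X) w (e1 e2 : R) :
  (e1 <= e2)%R -> sep_card d g A w e2 <= sep_card d g A w e1.
Proof.
move=> e12; apply: ereal_sup_le => _ [k [f [fi fA fs]] <-].
exists k => //; exists f; split => // i j ij.
exact: le_lt_trans e12 (fs i j ij).
Qed.

Lemma sep_card_setU (R : realType) (X : Type) (d : X -> X -> R) (p : nat)
  (g : 'I_p -> X -> X) (A B : set X) w eps :
  sep_card d g (A `|` B) w eps <= sep_card d g A w eps + sep_card d g B w eps.
Proof.
apply: ge_ereal_sup => _ [k [f [fi fAB fs]] <-].
pose SA : {set 'I_k} := finset (fun i => `[< A (f i) >]).
pose SB : {set 'I_k} := ~: SA.
have cA : (#|SA|%:R)%:E <= sep_card d g A w eps.
  apply: ereal_sup_ubound; exists #|SA| => //.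
  exists (fun j => f (enum_val j)); split.
  - by move=> i j /fi /enum_val_inj.
  - by move=> i; have := enum_valP i; rewrite inE => /asboolP.
  - move=> i j ij; apply: fs; apply: contra ij => /eqP /enum_val_inj ->.
    exact: eqxx.
have cB : (#|SB|%:R)%:E <= sep_card d g B w eps.
  apply: ereal_sup_ubound; exists #|SB| => //.
  exists (fun j => f (enum_val j)); split.
  - by move=> i j /fi /enum_val_inj.
  - move=> i; have := enum_valP i; rewrite !inE => /asboolPn nA.
    by case: (fAB (enum_val i)).
  - move=> i j ij; apply: fs; apply: contra ij => /eqP /enum_val_inj ->.
    exact: eqxx.
have -> : k = (#|SA| + #|SB|)%N by rewrite cardsC card_ord.
by rewrite natrD EFinD; apply: leeD.
Qed.

Lemma lne_le (R : realType) (x y : \bar R) : 0 <= x -> x <= y -> lne x <= lne y.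
Proof.
move=> x0 xy; have y0 := le_trans x0 xy.
by rewrite lee_lne // in_itv /= leey ?x0 ?y0.
Qed.

Lemma entropy_term_le (R : realType) (X : Type) (d : X -> X -> R) (p : nat)
  (g : 'I_p -> X -> X) (A B : set X) (e1 e2 : R) n :
  (forall w, sep_card d g A w e1 <= sep_card d g B w e2) ->
  entropy_term d g A e1 n <= entropy_term d g B e2 n.
Proof.
move=> H; rewrite /entropy_term; apply: lee_wpmul2l.
  by rewrite lee_fin invr_ge0.
apply: lne_le.
  by apply: mule_ge0; [rewrite lee_fin invr_ge0 exprn_ge0|apply: sume_ge0 => w _; apply: sep_card_ge0].
apply: lee_wpmul2l; first by rewrite lee_fin invr_ge0 exprn_ge0.
by apply: lee_sum => w _.
Qed.

Lemma lne_half (R : realType) (u a b : \bar R) (t : R) :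
  (0 < t)%R -> 0 <= a -> a <= b -> 0 <= u -> u <= a + b ->
  t%:E * lne u <= t%:E * lne b + (t * ln 2)%:E.
Proof.
move=> t0 a0 ab u0 uab.
have b0 := le_trans a0 ab.
have u2b : u <= 2%:E * b.
  apply: (le_trans uab); rewrite -[2%R]/(1 + 1)%R EFinD ge0_muleDl // mul1e.
  exact: leeD.
have [bz|bp] := eqVneq b 0.
  move: u2b; rewrite bz mule0 => u0'.
  have -> : u = 0 by apply/eqP; rewrite eq_le u0' u0.
  rewrite le0_lneNy // muleC gt0_mulNye ?lte_fin //.
have bpos : 0 < b by rewrite lt_def bp b0.
apply: (le_trans (lee_wpmul2l _ (lne_le u0 u2b))); first by rewrite lee_fin ltW.
rewrite lneM; last 2 first.
  by rewrite in_itv /= leey lte_fin ltr0n.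
  by rewrite in_itv /= leey bpos.
rewrite lne_EFin ?ltr0n // addeC muleDr //.
by rewrite fin_num_adde_defl.
Qed.

Lemma entropy_term_setU (R : realType) (X : Type) (d : X -> X -> R) (p : nat)
  (g : 'I_p -> X -> X) (A B : set X) (e : R) n : (0 < n)%N ->
  entropy_term d g (A `|` B) e n <=
  maxe (entropy_term d g A e n) (entropy_term d g B e n) + (ln 2 / n%:R)%:E.
Proof.
move=> n0; rewrite /entropy_term.
set c := ((p%:R ^+ n)^-1)%R%:E.
set SA := (\sum_(w : n.-tuple 'I_p) sep_card d g A w e).
set SB := (\sum_(w : n.-tuple 'I_p) sep_card d g B w e).
set SU := (\sum_(w : n.-tuple 'I_p) sep_card d g (A `|` B) w e).
have c0 : 0 <= c by rewrite lee_fin invr_ge0 exprn_ge0.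
have SA0 : 0 <= SA by apply: sume_ge0 => w _; apply: sep_card_ge0.
have SB0 : 0 <= SB by apply: sume_ge0 => w _; apply: sep_card_ge0.
have SU0 : 0 <= SU by apply: sume_ge0 => w _; apply: sep_card_ge0.
have uab : c * SU <= c * SA + c * SB.
  rewrite -ge0_muleDr //; apply: lee_wpmul2l => //.
  rewrite /SA /SB /SU -big_split /=; apply: lee_sum => w _.
  exact: sep_card_setU.
have t0 : (0 < n%:R^-1 :> R)%R by rewrite invr_gt0 ltr0n.
have -> : (ln 2 / n%:R)%R = (n%:R^-1 * ln 2)%R :> R.
  by rewrite mulrC.
have a0 : 0 <= c * SA by apply: mule_ge0.
have b0 : 0 <= c * SB by apply: mule_ge0.
have u0 : 0 <= c * SU by apply: mule_ge0.
have [ab|ba] := leP (c * SA) (c * SB).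
  apply: (le_trans (lne_half t0 a0 ab u0 uab)); apply: leeD => //.
  by rewrite le_max lexx orbT.
apply: (le_trans (lne_half t0 b0 (ltW ba) u0 _)); first by rewrite addeC.
by apply: leeD => //; rewrite le_max lexx.
Qed.

Definition FF (R : realType) (X : Type) (d : X -> X -> R) (p : nat)
  (g : 'I_p -> X -> X) (A : set X) (e : R) := limn_esup (entropy_term d g A e).

Lemma htopE (R : realType) (X : Type) (d : X -> X -> R) (p : nat)
  (g : 'I_p -> X -> X) (A : set X) :
  htop d g A = ereal_sup (FF d g A @` `]0%R, +oo[).
Proof.
rewrite /htop; apply: cvg_lim => //.
apply: (@nonincreasing_at_right_cvge _ (FF d g A) 0%R (BInfty _ false)) => //.
move=> e1 e2; rewrite !in_itv /= !andbT => e10 e20 e12.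
apply: le_limn_esup' => n; apply: entropy_term_le => w.
exact: sep_card_eps.
Qed.

Lemma htop_sub (R : realType) (X : Type) (d : X -> X -> R) (p : nat)
  (g : 'I_p -> X -> X) (A B : set X) : A `<=` B -> htop d g A <= htop d g B.
Proof.
move=> AB; rewrite !htopE; apply: ge_ereal_sup => _ [e e0 <-].
apply: le_trans (ereal_sup_ubound _); last by exists e.
apply: le_limn_esup' => n; apply: entropy_term_le => w.
exact: sep_card_sub.
Qed.

Lemma htop_setU (R : realType) (X : Type) (d : X -> X -> R) (p : nat)
  (g : 'I_p -> X -> X) (A B : set X) :
  htop d g (A `|` B) <= maxe (htop d g A) (htop d g B).
Proof.
rewrite !htopE; apply: ge_ereal_sup => _ [e e0 <-].
apply: le_trans (limn_esup_union (c := ln 2) _) _.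
  by move=> n n0; apply: entropy_term_setU.
have h1 : FF d g A e <= ereal_sup (FF d g A @` `]0%R, +oo[) by apply: ereal_sup_ubound; exists e.
have h2 : FF d g B e <= ereal_sup (FF d g B @` `]0%R, +oo[) by apply: ereal_sup_ubound; exists e.
rewrite ge_max; apply/andP; split.
  by apply: (le_trans h1); rewrite le_max lexx.
by apply: (le_trans h2); rewrite le_max lexx orbT.
Qed.

Lemma htop_set0 (R : realType) (X : Type) (d : X -> X -> R) (p : nat)
  (g : 'I_p -> X -> X) : htop d g set0 <= -oo.
Proof.
rewrite htopE; apply: ge_ereal_sup => _ [e e0 <-].
apply: near_le_esup; near=> n.
have n0 : (0 < n)%N by near: n; exact: nbhs_infty_gt.
rewrite /entropy_term.
have -> : \sum_(w : n.-tuple 'I_p) sep_card d g set0 w e = 0.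
  apply: big1 => w _; apply/eqP; rewrite eq_le sep_card_ge0 andbT.
  apply: ge_ereal_sup => _ [k [f [_ f0 _]] <-].
  by case: k f f0 => [|k] f f0 //; have := f0 ord0.
rewrite mule0 le0_lneNy // muleC gt0_mulNye //.
by rewrite lte_fin invr_gt0 ltr0n.
Unshelve. all: by end_near.
Qed.

Lemma htop_ge0 (R : realType) (X : Type) (d : X -> X -> R) (p : nat)
  (g : 'I_p -> X -> X) : [set: X] !=set0 -> (0 < p)%N -> 0 <= htop d g [set: X].
Proof.
move=> [x0 _] p0; rewrite htopE.
apply: le_trans (ereal_sup_ubound _); last by exists 1%R => //=; rewrite in_itv /= andbT.
apply: limf_esup_ge0 => // n; rewrite /entropy_term.
apply: mule_ge0; first by rewrite lee_fin invr_ge0.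
rewrite lne_ge0.
have s1 : forall w : n.-tuple 'I_p, (1%R)%:E <= sep_card d g [set: X] w 1%R.
  move=> w; apply: ereal_sup_ubound; exists 1%N => //.
  exists (fun _ => x0); split => //.
  - by move=> i j _; rewrite (ord1 i) (ord1 j).
  - by move=> i j; rewrite (ord1 i) (ord1 j) eqxx.
have hS : \sum_(w : n.-tuple 'I_p) (1%R)%:E <= \sum_(w : n.-tuple 'I_p) sep_card d g [set: X] w 1%R.
  by apply: lee_sum => w _; apply: s1.
have c0 : 0 <= (((p%:R ^+ n)^-1)%R)%:E :> \bar R by rewrite lee_fin invr_ge0 exprn_ge0.
apply: le_trans (lee_wpmul2l c0 hS).
rewrite sumEFin sumr_const card_tuple card_ord -EFinM.
by rewrite lee_fin natrX mulVf // expf_neq0 // pnatr_eq0 -lt0n.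
Qed.

Lemma has_elt_bigU (X : Type) (l : seq (set X)) (A : set X) (y : X) :
  has_elt l A -> A y -> (\big[setU/set0]_(B <- l) B) y.
Proof.
elim: l => [//|B l IH] /= [->|hl] Ay; rewrite big_cons; [by left|right; exact: IH].
Qed.

Lemma has_elt_map_pmap (I T : Type) (F : I -> T) (s : seq (option I)) (j : I) :
  has_elt s (Some j) -> has_elt (map F (pmap id s)) (F j).
Proof.
elim: s => [//|a s IH] /= [->|hs] /=; first by left.
by case: a => [a|] /=; [right|]; apply: IH.
Qed.

Lemma has_elt_map_inv (I T : Type) (F : I -> T) (l : seq I) (A : T) :
  has_elt (map F l) A -> exists j, A = F j.
Proof.
elim: l => [//|a l IH] /= [<-|h]; [by exists a|exact: IH].
Qed.

Lemma cover_main (R : realType) (X : Type) (d : X -> X -> R) (K : set X)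
  (Q : set X -> Prop) :
  mcompact_space d -> mclosed d K ->
  (forall x, K x -> exists N, closed_nbhd d x N /\ Q N) ->
  exists l : seq (set X),
    K `<=` \big[setU/set0]_(A <- l) A /\ (forall A, has_elt l A -> Q A).
Proof.
move=> cpt Kc H.
have H' : forall x : {x | K x}, exists NU : set X * set X,
    [/\ mopen d NU.2, NU.2 (sval x), NU.2 `<=` NU.1 & Q NU.1].
  case=> x Kx; have [N [[Nc [U [Uo Ux UN]]] QN]] := H x Kx.
  by exists (N, U).
have [f hf] := choice H'.
pose U (i : option {x | K x}) := if i is Some j then (f j).2 else ~` K.
have Uo : forall i, mopen d (U i).
  by case=> [j|] /=; [case: (hf j)|exact: Kc].
have Ucov : [set: X] `<=` \bigcup_(i in [set: option {x | K x}]) U i.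
  move=> y _; case: (pselect (K y)) => Ky.
    by exists (Some (exist _ y Ky)) => //=; case: (hf (exist _ y Ky)).
  by exists None.
have [s hs] := cpt _ U Uo Ucov.
exists (map (fun j => (f j).1) (pmap id s)); split.
  move=> y Ky; have [i si Uy] := hs y.
  case: i si Uy => [j|] si Uy /=; last by [].
  apply: (has_elt_bigU (has_elt_map_pmap (fun j => (f j).1) si)).
  by case: (hf j) => _ _ + _; apply.
move=> A hA; have [j ->] := has_elt_map_inv hA; have [_ _ _ ?] := hf j; done.
Qed.

Lemma htop_big (R : realType) (X : Type) (d : X -> X -> R) (p : nat)
  (g : 'I_p -> X -> X) (l : seq (set X)) :
  htop d g (\big[setU/set0]_(A <- l) A) <= \big[maxe/-oo]_(A <- l) htop d g A.
Proof.
elim: l => [|A l IH]; first by rewrite !big_nil; apply: htop_set0.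
rewrite !big_cons; apply: le_trans (htop_setU _ _ _ _) _.
by rewrite ge_max le_max lexx /= le_max IH orbT.
Qed.

Lemma big_P (R : realType) (T : Type) (h : T -> \bar R) (P : \bar R -> Prop)
  (l : seq T) : (forall a b, P a -> P b -> P (maxe a b)) -> P -oo ->
  (forall A, has_elt l A -> P (h A)) -> P (\big[maxe/-oo]_(A <- l) h A).
Proof.
move=> Pm P0; elim: l => [|A l IH] H; first by rewrite big_nil.
rewrite big_cons; apply: Pm; first by apply: H; left.
by apply: IH => B hB; apply: H; right.
Qed.

Local Close Scope ereal_scope.

Theorem mainTheorem8 (R : realType) (X : Type) (d : X -> X -> R)
  (p : nat) (g : 'I_p -> X -> X) (K : set X) :
  is_metric d -> mcompact_space d -> [set: X] !=set0 -> (0 < p)%N ->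
  (forall i, mcontinuous d (g i)) -> mclosed d K ->
  (((0 < htop d g K)%E -> K `&` Ep d g !=set0) /\
   (htop d g K = htop d g [set: X] -> K `&` Epf d g !=set0)).
Proof.
move=> _ cpt Xn0 p0 _ Kc; split.
- move=> hK; case: (pselect (K `&` Ep d g !=set0)) => [h|nE]; first exact: h.
  exfalso.
  have H : forall x, K x -> exists N, closed_nbhd d x N /\ (htop d g N <= 0)%E.
    move=> x Kx; have nEp : ~ Ep d g x.
      move=> Ex; apply: nE; exists x; split; [exact: Kx|exact: Ex].
    move: nEp; rewrite /Ep /= => /existsNP [N /not_implyP [cN hN]].
    exists N; split; first exact: cN.
    by rewrite leNgt; apply/negP; exact: hN.
  have [l [Kl Ql]] := cover_main cpt Kc H.
  have hle : (htop d g K <= 0)%E.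
    apply: (le_trans (htop_sub d g Kl)); apply: (le_trans (htop_big d g l)).
    apply: (big_P (P := fun a => (a <= 0)%E)).
    + by move=> a b a0 b0; rewrite ge_max a0 b0.
    + exact: leNye.
    + exact: Ql.
  by move: hle; rewrite leNgt hK.
- move=> hK; case: (pselect (K `&` Epf d g !=set0)) => [h|nE]; first exact: h.
  exfalso.
  have H : forall x, K x -> exists N, closed_nbhd d x N /\
      (htop d g N < htop d g [set: X])%E.
    move=> x Kx; have nEp : ~ Epf d g x.
      move=> Ex; apply: nE; exists x; split; [exact: Kx|exact: Ex].
    move: nEp; rewrite /Epf /= => /existsNP [N /not_implyP [cN hN]].
    exists N; split; first exact: cN.
    have hle : (htop d g N <= htop d g [set: X])%E := htop_sub d g (fun _ _ => I).
    rewrite lt_neqAle; apply/andP; split; [apply/eqP; exact: hN|exact: hle].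
  have [l [Kl Ql]] := cover_main cpt Kc H.
  have hlt : (htop d g K < htop d g [set: X])%E.
    apply: (le_lt_trans (htop_sub d g Kl)); apply: (le_lt_trans (htop_big d g l)).
    apply: (big_P (P := fun a => (a < htop d g [set: X])%E)).
    + by move=> a b a0 b0; rewrite gt_max a0 b0.
    + exact: (lt_le_trans (ltNyr 0%R) (htop_ge0 d g Xn0 p0)).
    + exact: Ql.
  by move: hlt; rewrite hK ltxx.
Qed.
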